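(* Let $V$ be a finite set with $|V| = n$, where $n$ is prime, and let $c: V \rightarrow V$ be a cyclic permutation of $V$ (a single $n$-cycle). Then the set of nonconstant colorings $\chi: V \rightarrow \mathbb{P}$ is the disjoint union $$\biguplus_{\pi\in \mathfrak{S}_V} A(\pi, \mathrm{Des}(\pi c \pi^{-1})).$$
   Context: $\mathbb{P} = \{1,2,\ldots\}$. $\mathfrak{S}_V$ denotes the set of bijections $\pi: V \rightarrow [n]$. For $\pi \in \mathfrak{S}_V$ and $S \subseteq [n-1]$, $A(\pi,S)$ is the set of maps $\chi: V \rightarrow \mathbb{P}$ such that $\chi(\pi^{-1}(1)) \le \chi(\pi^{-1}(2)) \le \cdots \le \chi(\pi^{-1}(n))$ and $\chi(\pi^{-1}(i)) < \chi(\pi^{-1}(i+1))$ whenever $i \in S$. For a permutation $\sigma$ of $[n]$, its descent set is $\mathrm{Des}(\sigma) = \{ i \in [n-1] : \sigma(i) > \sigma(i+1)\}$; here $\pi c \pi^{-1}$ is a permutation of $[n]$. *)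

(* Defs.v *)
From mathcomp Require Import all_boot all_fingroup.
Set Implicit Arguments. Unset Strict Implicit. Unset Printing Implicit Defensive.

(* Positions [n] = {1..n} are encoded 0-indexed as 'I_n (shift by one, which
   preserves the order, so descents and the chain conditions are unchanged). *)

(* x = pi^{-1}(i), y = pi^{-1}(i+1), so (pi c pi^{-1})(i) = pi (c x) etc. *)
Definition DesConj (V : finType) (pi : {ffun V -> 'I_#|V|}) (c : {perm V})
  : pred nat :=
  fun i => [exists x : V, exists y : V,
             [&& (pi x : nat) == i, (pi y : nat) == i.+1 &
                 (pi (c y) < pi (c x))%N]].

Definition inA (V : finType) (pi : {ffun V -> 'I_#|V|}) (S : pred nat)
  (chi : V -> nat) : Prop :=
  (forall x, 0 < chi x)%N /\
  forall x y : V, (pi y : nat) = (pi x).+1 ->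
    (chi x <= chi y)%N /\ (S (pi x : nat) -> (chi x < chi y)%N).

Definition nonconstant (V : finType) (chi : V -> nat) : Prop :=
  exists x y : V, chi x <> chi y.

Definition full_cycle (V : finType) (c : {perm V}) : Prop :=
  forall x : V, porbit c x = [set: V].

(* Main.v *)
Require Import Defs.
From mathcomp Require Import all_boot all_fingroup.
From mathcomp Require Import zify.

Set Implicit Arguments. Unset Strict Implicit. Unset Printing Implicit Defensive.

Fixpoint llt (s t : seq nat) : bool :=
  match s, t with
  | x :: s', y :: t' => (x < y) || ((x == y) && llt s' t')
  | _, _ => false
  end.

Lemma llt_irr s : llt s s = false.
Proof. by elim: s => //= x s ->; rewrite ltnn eqxx. Qed.

Lemma llt_trans s t u : llt s t -> llt t u -> llt s u.
Proof.
elim: s t u => [|x s IH] [|y t] [|z u] //=.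
move=> /orP[xy|/andP[/eqP exy st]] /orP[yz|/andP[/eqP eyz tu]].
- by rewrite (ltn_trans xy yz).
- by rewrite -eyz xy.
- by rewrite exy yz.
- by rewrite exy eyz eqxx (IH _ _ st tu) orbT.
Qed.

Lemma llt_total s t : size s = size t -> s != t -> llt s t || llt t s.
Proof.
elim: s t => [|x s IH] [|y t] //= [/IH H].
rewrite eqseq_cons => ne; case: (ltngtP x y) => // exy; subst y.
by move: ne; rewrite eqxx /= => /H /orP[-> | ->] //; rewrite orbT.
Qed.

Lemma llt_rcons s t a b : size s = size t ->
  llt (rcons s a) (rcons t b) -> llt s t || (s == t).
Proof.
elim: s t => [|x s IH] [|y t] //= [/IH H] /orP[->//|/andP[/eqP <- /H]].
by rewrite eqxx ltnn /= eqseq_cons eqxx.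
Qed.

Fixpoint word (V : finType) (c : {perm V}) (chi : V -> nat) k u : seq nat :=
  if k is k'.+1 then chi u :: word c chi k' (c u) else [::].

Lemma word_size (V : finType) (c : {perm V}) chi k u : size (word c chi k u) = k.
Proof. by elim: k u => //= k IH u; rewrite IH. Qed.

Lemma word_S (V : finType) (c : {perm V}) chi k u :
  word c chi k.+1 u = chi u :: word c chi k (c u).
Proof. by []. Qed.

Lemma word_rcons (V : finType) (c : {perm V}) chi k u :
  word c chi k.+1 u = rcons (word c chi k u) (chi (iter k c u)).
Proof.
elim: k u => [|k IH] u //.
rewrite (word_S _ _ k.+1) IH (word_S _ _ k) /=; by rewrite -iterSr.
Qed.

Lemma word_nth (V : finType) (c : {perm V}) chi k u j : j < k ->
  nth 0 (word c chi k u) j = chi (iter j c u).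
Proof.
by elim: k u j => [|k IH] u [|j] //= ?; rewrite IH // -iterSr.
Qed.

Lemma iter_n (V : finType) (c : {perm V}) u : full_cycle c -> iter #|V| c u = u.
Proof. move=> fc; have := iter_porbit c u; by rewrite fc cardsT. Qed.

Lemma iter_mul (V : finType) (c : {perm V}) u q : full_cycle c ->
  iter (q * #|V|) c u = u.
Proof.
move=> fc; elim: q => [|q IH] //; by rewrite mulSn iterD IH iter_n.
Qed.

Lemma iter_mod (V : finType) (c : {perm V}) u i : full_cycle c ->
  iter i c u = iter (i %% #|V|) c u.
Proof. by move=> fc; rewrite {1}(divn_eq i #|V|) addnC iterD iter_mul. Qed.

Lemma word_inj (V : finType) (c : {perm V}) chi :
  prime #|V| -> full_cycle c -> nonconstant chi -> injective (word c chi #|V|).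
Proof.
move=> pn fc [x0 [y0 nxy]] u v Euv.
apply/eqP; apply: contraT => neq.
have n0 : 0 < #|V| by exact: prime_gt0.
set f := fun j => chi (iter j c u).
have: v \in porbit c u by rewrite fc inE.
case/porbitP => i; rewrite permX (iter_mod _ _ fc) => vd.
set d := i %% #|V| in vd.
have dn : d < #|V| by rewrite ltn_pmod.
have d0 : 0 < d.
  by rewrite lt0n; apply/contraNneq: neq => d0; rewrite vd d0.
have fper j q : f (j + q * #|V|) = f j by rewrite /f iterD iter_mul.
have hd j : j < #|V| -> f j = f (j + d).
  move=> jn; rewrite /f iterD -vd -!(word_nth c chi _ jn); by rewrite Euv.
have hd' j : f j = f (j + d).
  rewrite {1 2}(divn_eq j #|V|) (addnC (_ * _)) fper -addnA (addnC (_ * _)) addnA fper.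
  by apply: hd; rewrite ltn_pmod.
have he e j : f j = f (j + e * d).
  elim: e j => [|e IH] j; first by rewrite addn0.
  by rewrite mulSn addnA -(IH (j + d)); exact: hd'.
have cop : gcdn #|V| d = 1.
  apply/eqP; rewrite -/(coprime _ _) prime_coprime //; by rewrite gtnNdvd.
have [a _] := Bezoutl d n0.
rewrite cop => /dvdnP[q Hq].
have step j : f j.+1 = f j.
  by rewrite -addn1 (he a) -addnA Hq fper.
have fc0 j : f j = f 0 by elim: j => // j <-; rewrite step.
case: nxy.
have: x0 \in porbit c u by rewrite fc inE.
have: y0 \in porbit c u by rewrite fc inE.
case/porbitP => b ->; case/porbitP => b' ->; rewrite !permX.
by rewrite -/(f b) -/(f b') !fc0.
Qed.

Definition rank (V : finType) (c : {perm V}) (chi : V -> nat) (u : V) : nat :=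
  #|[pred v | llt (word c chi #|V| v) (word c chi #|V| u)]|.

Lemma rank_lt (V : finType) (c : {perm V}) chi u : rank c chi u < #|V|.
Proof.
rewrite /rank; set A := [pred v | _].
have := cardC A.
have : 0 < #|[predC A]| by apply/card_gt0P; exists u; rewrite !inE llt_irr.
move=> h1 h2; by rewrite -h2 -{1}[#|A|]addn0 ltn_add2l.
Qed.

Definition pi0 (V : finType) (c : {perm V}) chi : {ffun V -> 'I_#|V|} :=
  [ffun u => Ordinal (rank_lt c chi u)].

Lemma rank_mono (V : finType) (c : {perm V}) chi u v :
  llt (word c chi #|V| u) (word c chi #|V| v) -> rank c chi u < rank c chi v.
Proof.
move=> uv; apply: proper_card; rewrite properE; apply/andP; split.
  by apply/subsetP => w; rewrite !inE => h; exact: llt_trans h uv.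
by apply/subsetPn; exists u; rewrite !inE ?llt_irr.
Qed.

Lemma rank_ltE (V : finType) (c : {perm V}) chi u v :
  injective (word c chi #|V|) ->
  (rank c chi u < rank c chi v) = llt (word c chi #|V| u) (word c chi #|V| v).
Proof.
move=> winj; apply/idP/idP; last exact: rank_mono.
move=> lt; case: (eqVneq u v) => [e|ne]; first by rewrite e ltnn in lt.
have := @llt_total (word c chi #|V| u) (word c chi #|V| v).
rewrite !word_size (inj_eq winj) ne => /(_ erefl isT) /orP[//|/rank_mono].
lia.
Qed.

Lemma rank_inj (V : finType) (c : {perm V}) chi :
  injective (word c chi #|V|) -> injective (rank c chi).
Proof.
move=> winj u v e; apply/eqP; apply: contraT => ne.
have := @llt_total (word c chi #|V| u) (word c chi #|V| v).
rewrite !word_size (inj_eq winj) ne => /(_ erefl isT) /orP[] /rank_mono; lia.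
Qed.

Lemma valid_L0 (V : finType) (c : {perm V}) chi (pi : {ffun V -> 'I_#|V|}) :
  bijective pi -> inA pi (DesConj pi c) chi -> forall u v,
  (pi v : nat) = (pi u).+1 ->
  chi u <= chi v /\ (chi u = chi v -> pi (c u) < pi (c v)).
Proof.
move=> pib [_ H] u v e; have [le st] := H u v e; split=> // ee.
case: (ltngtP (pi (c u)) (pi (c v))) => // h.
  have : chi u < chi v.
    apply: st; apply/existsP; exists u; apply/existsP; exists v.
    by rewrite e !eqxx h.
  lia.
have /ord_inj /(bij_inj pib) /perm_inj E := h.
rewrite E in e; lia.
Qed.

Lemma valid_L (V : finType) (c : {perm V}) chi (pi : {ffun V -> 'I_#|V|}) :
  bijective pi -> inA pi (DesConj pi c) chi -> forall m u v,
  (pi v : nat) = pi u + m.+1 ->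
  chi u <= chi v /\ (chi u = chi v -> pi (c u) < pi (c v)).
Proof.
move=> pib vA; have [g pg gp] := pib.
elim=> [|m IH] u v e; first by apply: valid_L0; rewrite // e addn1.
have kn : pi u + m.+1 < #|V| by have := ltn_ord (pi v); lia.
set w := g (Ordinal kn).
have ew : (pi w : nat) = pi u + m.+1 by rewrite /w gp.
have [h1 h2] := IH u w ew.
have [h3 h4] := valid_L0 pib vA (u:=w) (v:=v) ltac:(rewrite e ew; lia).
split; first lia.
move=> ee; have e1 : chi u = chi w by lia.
have e2 : chi w = chi v by lia.
have := h2 e1; have := h4 e2; lia.
Qed.

Lemma valid_lt (V : finType) (c : {perm V}) chi (pi : {ffun V -> 'I_#|V|}) :
  bijective pi -> inA pi (DesConj pi c) chi -> forall u v,
  pi u < pi v ->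
  chi u <= chi v /\ (chi u = chi v -> pi (c u) < pi (c v)).
Proof.
move=> pib vA u v lt; apply: (valid_L pib vA (m := pi v - pi u - 1)); lia.
Qed.

Lemma valid_word (V : finType) (c : {perm V}) chi (pi : {ffun V -> 'I_#|V|}) :
  bijective pi -> inA pi (DesConj pi c) chi -> forall k u v,
  pi u < pi v -> llt (word c chi k u) (word c chi k v) ||
                 (word c chi k u == word c chi k v).
Proof.
move=> pib vA; elim=> [|k IH] u v lt //=.
have [le st] := valid_lt pib vA lt.
case: (ltngtP (chi u) (chi v)) => // h; first lia.
have := IH _ _ (st h); rewrite h eqseq_cons eqxx /=.
by case/orP => ->; rewrite ?orbT.
Qed.

Lemma card_bij_lt (V : finType) (q : {ffun V -> 'I_#|V|}) (k : 'I_#|V|) :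
  bijective q -> #|[pred v | q v < k]| = k.
Proof.
case=> g qg gq; have le : k <= #|V| by exact: ltnW.
have -> : #|[pred v | q v < k]| = #|[set g (widen_ord le j) | j : 'I_k]|.
  apply: eq_card => v; rewrite !inE; apply/idP/imsetP.
    move=> h; exists (Ordinal h) => //; rewrite -{1}[v]qg; congr g.
    by apply: ord_inj.
  by case=> j _ ->; rewrite gq /=; exact: ltn_ord j.
rewrite card_imset ?card_ord //.
move=> a b /(can_inj gq) /(congr1 val) /= ?; exact: ord_inj.
Qed.

Theorem theorem2p1 (V : finType) (c : {perm V}) :
  prime #|V| -> full_cycle c ->
  forall chi : V -> nat,
    ((forall x, 0 < chi x)%N /\ nonconstant chi) <->
    (exists! pi : {ffun V -> 'I_#|V|},
        bijective pi /\ inA pi (DesConj pi c) chi).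
Proof.
move=> pn fc chi; have n1 := prime_gt1 pn; have n0 := prime_gt0 pn.
split.
- case=> pos nc; have winj := word_inj pn fc nc.
  set p := pi0 c chi.
  have pE u : (p u : nat) = rank c chi u by rewrite ffunE.
  have [m nm] : exists m, #|V| = m.+1 by exists #|V|.-1; lia.
  have wS u : word c chi #|V| u = chi u :: word c chi m (c u) by rewrite nm.
  have wc u : word c chi #|V| (c u) = rcons (word c chi m (c u)) (chi u).
    rewrite nm word_rcons; congr rcons; by rewrite -iterSr -nm iter_n.
  have pinj : injective p.
    move=> u v /(congr1 val); rewrite /= !pE; exact: rank_inj.
  have valid : bijective p /\ inA p (DesConj p c) chi.
    split; first by apply: inj_card_bij => //; rewrite card_ord.
    split=> // x y e; rewrite !pE in e.
    have xy : llt (word c chi #|V| x) (word c chi #|V| y).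
      by rewrite -rank_ltE // e.
    rewrite wS wS /= in xy.
    split; first by case/orP: xy => [/ltnW //|/andP[/eqP -> _]].
    case/existsP => x' /existsP[y' /and3P[/eqP ex /eqP ey lt]].
    rewrite !pE in ex ey lt.
    have ex' : x' = x by apply: (rank_inj winj).
    have ey' : y' = y by apply: (rank_inj winj); rewrite ey e.
    subst x' y'.
    rewrite rank_ltE // !wc in lt.
    have sz : size (word c chi m (c y)) = size (word c chi m (c x)).
      by rewrite !word_size.
    have := llt_rcons sz lt.
    case/orP: xy => // /andP[/eqP exy txy] /orP[tyx|/eqP tyx].
      by have := llt_trans txy tyx; rewrite llt_irr.
    by rewrite tyx llt_irr in txy.
  exists p; split; first exact: valid.
  move=> q [qb qA]; apply/ffunP => u; apply: ord_inj; rewrite pE.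
  have qlt v w : q v < q w -> llt (word c chi #|V| v) (word c chi #|V| w).
    move=> lt; case/orP: (valid_word qb qA #|V| lt) => // /eqP /winj E.
    by rewrite E ltnn in lt.
  rewrite -(card_bij_lt (q u) qb) /rank; apply: eq_card => v; rewrite !inE.
  apply/idP/idP; last exact: qlt.
  move=> h; case: (ltngtP (q v) (q u)) => // h'.
    by have := llt_trans h (qlt _ _ h'); rewrite llt_irr.
  by move/ord_inj/(bij_inj qb): h' h => ->; rewrite llt_irr.
- case=> q [[qb qA] _]; split; first exact: qA.1.
  have [/existsP[x /existsP[y /eqP ne]]|H] :=
    boolP [exists x, exists y, chi x != chi y]; first by exists x, y.
  exfalso.
  have cst x y : chi x = chi y.
    apply/eqP; apply: contraNT H => nh; apply/existsP; exists x.
    by apply/existsP; exists y.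
  have [g qg gq] := qb.
  set u := g (Ordinal n0).
  have qu : (q u : nat) = 0 by rewrite /u gq.
  have cu : c u = u.
    set v := (c^-1)%g u.
    case: (eqVneq v u) => [e|ne]; first by rewrite -{1}e permKV.
    have qv : (q v : nat) != 0.
      apply: contra ne => /eqP h; apply/eqP; apply: (bij_inj qb).
      by apply: ord_inj; rewrite h qu.
    have [_ st] := valid_lt qb qA (u := u) (v := v) ltac:(rewrite qu; lia).
    have := st (cst _ _); rewrite /v permKV qu; lia.
  set x := g (Ordinal n1).
  have : x \in porbit c u by rewrite fc inE.
  case/porbitP => i xu; rewrite permX_fix // in xu.
  have := gq (Ordinal n1); rewrite -/x xu => /(congr1 val) /=.
  by rewrite qu.
Qed.
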